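(* Let $\mathcal{B}=\langle V,F,E\rangle$ be a self-contained finite bipartite graph. Then the output of Algorithm 1 applied to $\mathcal{B}$ with no exogenous vertices ($W=\emptyset$) is unique, i.e. all runs of the algorithm (for all possible choices of minimal self-contained sets) produce the same directed cluster graph.
   Context: $\mathrm{adj}_{\mathcal{B}}(X)$ is the set of vertices adjacent to some vertex of $X$. A set $F'\subseteq F$ is self-contained if $|F'|=|\mathrm{adj}_{\mathcal{B}}(F')|$ and $|F''|\le|\mathrm{adj}_{\mathcal{B}}(F'')|$ for all $F''\subseteq F'$; $\mathcal{B}$ is self-contained if $|F|=|V|$ and $F$ is self-contained; a non-empty self-contained set is minimal self-contained if no non-empty strict subset is self-contained. A directed cluster graph is a pair $\langle\mathcal{V},\mathcal{E}\rangle$ with $\mathcal{V}$ a partition of a vertex set and $\mathcal{E}$ a set of edges $x\to C$ from vertices to clusters. Algorithm 1 (here with $W=\emptyset$): initialize $\mathcal{E}=\emptyset$, $\mathcal{V}=\emptyset$, $\mathcal{B}'=\langle V',F',E'\rangle=\mathcal{B}$. While $\mathcal{B}'$ is not the null graph: choose a minimal self-contained set $S_F\subseteq F'$ of $\mathcal{B}'$; let $C=S_F\cup\mathrm{adj}_{\mathcal{B}'}(S_F)$; add $C$ to $\mathcal{V}$; for each $v\in\mathrm{adj}_{\mathcal{B}}(S_F)\setminus\mathrm{adj}_{\mathcal{B}'}(S_F)$ add $v\to C$ to $\mathcal{E}$; replace $\mathcal{B}'$ by its subgraph induced by $(V'\cup F')\setminus C$. Output $\langle\mathcal{V},\mathcal{E}\rangle$.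 *)

(* Defs.v *)
From mathcomp Require Import all_boot.
Set Implicit Arguments. Unset Strict Implicit. Unset Printing Implicit Defensive.

(* A finite bipartite graph B = <V, F, E> is represented inside a finite type T
   by two disjoint sets V F : {set T} and an edge relation E : rel T, where
   E f v means there is an edge between f (in F) and v (in V).            *)

Section Defs.
Variable T : finType.

Definition adj (Vs : {set T}) (E : rel T) (X : {set T}) : {set T} :=
  [set v in Vs | [exists f in X, E f v]].

Definition self_contained_set (Vs Fs : {set T}) (E : rel T) (X : {set T}) : Prop :=
  [/\ X \subset Fs,
      #|X| = #|adj Vs E X| &
      forall Y : {set T}, Y \subset X -> #|Y| <= #|adj Vs E Y|].

Definition minimal_self_contained (Vs Fs : {set T}) (E : rel T) (X : {set T}) : Prop :=
  [/\ X != set0, self_contained_set Vs Fs E X &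
      forall Y : {set T}, Y \proper X -> Y != set0 -> ~ self_contained_set Vs Fs E Y].

Definition bipartite (V F : {set T}) (E : rel T) : Prop :=
  [disjoint V & F] /\ (forall x y, E x y -> x \in F /\ y \in V).

Definition self_contained_graph (V F : {set T}) (E : rel T) : Prop :=
  #|F| = #|V| /\ self_contained_set V F E F.

Definition cluster (Vs : {set T}) (E : rel T) (S : {set T}) : {set T} :=
  S :|: adj Vs E S.

Definition new_edges (V Vs : {set T}) (E : rel T) (S : {set T})
  : {set T * {set T}} :=
  [set (v, cluster Vs E S) | v in adj V E S :\: adj Vs E S].

(* alg_run V E Vs Fs Vc Ec Vo Eo : starting from the current remaining graph
   B' = <Vs, Fs, E restricted> and current directed cluster graph <Vc, Ec>,
   some run of the loop of Algorithm 1 (W = empty) terminates with output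
   <Vo, Eo>.  V is the V-side of the original graph B (used for adj_B). *)
Inductive alg_run (V : {set T}) (E : rel T) :
  {set T} -> {set T} -> {set {set T}} -> {set T * {set T}} ->
  {set {set T}} -> {set T * {set T}} -> Prop :=
| run_done Vc Ec : alg_run V E set0 set0 Vc Ec Vc Ec
| run_step Vs Fs Vc Ec S Vo Eo :
    ~~ ((Vs == set0) && (Fs == set0)) ->
    minimal_self_contained Vs Fs E S ->
    alg_run V E (Vs :\: cluster Vs E S) (Fs :\: cluster Vs E S)
            (cluster Vs E S |: Vc) (Ec :|: new_edges V Vs E S) Vo Eo ->
    alg_run V E Vs Fs Vc Ec Vo Eo.

Definition algorithm1_output (V F : {set T}) (E : rel T)
  (Vo : {set {set T}}) (Eo : {set T * {set T}}) : Prop :=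
  alg_run V E V F set0 set0 Vo Eo.

End Defs.

(* Main.v *)
Require Import Defs.
From mathcomp Require Import all_boot zify.
From Stdlib Require Import Classical.
Set Implicit Arguments. Unset Strict Implicit. Unset Printing Implicit Defensive.

Section Proof.
Variables (T : finType) (V F : {set T}) (E : rel T).
Hypothesis hdis : [disjoint V & F].
Hypothesis hE : forall x y, E x y -> x \in F /\ y \in V.

Definition valid (Vs Fs : {set T}) : Prop :=
  [/\ Vs \subset V, Fs \subset F, #|Fs| = #|Vs| &
      forall Y : {set T}, Y \subset Fs -> #|Y| <= #|adj Vs E Y| ].

Lemma adj_sub Vs X : adj Vs E X \subset Vs.
Proof. by apply/subsetP=> x; rewrite inE => /andP[]. Qed.

Lemma adj_V Vs X x : x \in adj Vs E X -> x \in V.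
Proof. by rewrite inE => /andP[_ /existsP[f /andP[_ /hE[]]]]. Qed.

Lemma VnF x : x \in V -> x \in F = false.
Proof. exact: disjointFr. Qed.

Lemma adjU Vs (A B : {set T}) : adj Vs E (A :|: B) = adj Vs E A :|: adj Vs E B.
Proof.
apply/setP=> x; rewrite !inE; case: (x \in Vs) => //=; [idtac].
apply/existsP/orP.
- case=> f; rewrite inE => /andP[/orP[] hf he]; [left|right]; apply/existsP; exists f; by rewrite hf.
- by case=> [/existsP[f /andP[hf he]]|/existsP[f /andP[hf he]]]; exists f; rewrite inE hf ?orbT he.
Qed.

Lemma adjS Vs (A B : {set T}) : A \subset B -> adj Vs E A \subset adj Vs E B.
Proof.
move=> /subsetP sAB; apply/subsetP=> x; rewrite !inE => /andP[-> /existsP[f /andP[hf he]]].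
by apply/existsP; exists f; rewrite sAB.
Qed.

Lemma adjD Vs C X : adj (Vs :\: C) E X = adj Vs E X :\: C.
Proof. by apply/setP=> x; rewrite !inE andbA. Qed.

Lemma adj0 Vs : adj Vs E set0 = set0.
Proof. apply/setP=> x; rewrite !inE; apply/negP=> /andP[_ /existsP[f]]; by rewrite inE. Qed.

Lemma adjI Vs (A B : {set T}) : adj Vs E (A :&: B) \subset adj Vs E A :&: adj Vs E B.
Proof. by rewrite subsetI !adjS ?subsetIl ?subsetIr. Qed.


Lemma FnV x : x \in F -> x \in V = false.
Proof. exact: disjointFl. Qed.

Lemma disj_min Vs Fs S1 S2 : valid Vs Fs ->
  minimal_self_contained Vs Fs E S1 -> minimal_self_contained Vs Fs E S2 ->
  S1 != S2 -> S1 :&: S2 = set0 /\ adj Vs E S1 :&: adj Vs E S2 = set0.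
Proof.
move=> [_ _ _ hall] [ne1 [s1F c1 h1] m1] [ne2 [s2F c2 h2] m2] neq.
set I := S1 :&: S2.
have hU : #|S1 :|: S2| <= #|adj Vs E (S1 :|: S2)| by apply: hall; rewrite subUset s1F s2F.
rewrite adjU in hU.
have e1 := cardsUI S1 S2. have e2 := cardsUI (adj Vs E S1) (adj Vs E S2).
have hI := hall I (subset_trans (subsetIl _ _) s1F).
have hIa := subset_leq_card (adjI Vs S1 S2).
have cI : #|I| = #|adj Vs E I|.
  rewrite /I; move: hU e1 e2 hI hIa c1 c2; rewrite -/I; lia.
have cA : #|adj Vs E S1 :&: adj Vs E S2| <= #|I| by rewrite /I; lia.
case: (eqVneq I set0) => [I0|In0].
  split => //; apply: cards0_eq; rewrite I0 cards0 in cA; lia.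
exfalso.
have scI : self_contained_set Vs Fs E I.
  split; [exact: subset_trans (subsetIl _ _) s1F | exact: cI |].
  move=> Y hY; apply: h1; exact: subset_trans hY (subsetIl _ _).
case p1: (I \proper S1); first exact: (m1 I p1 In0 scI).
case p2: (I \proper S2); first exact: (m2 I p2 In0 scI).
move: p1 p2; rewrite !properEneq subsetIl subsetIr !andbT => /negbFE/eqP e1' /negbFE/eqP e2'.
by move: neq; rewrite -e1' -e2' eqxx.
Qed.

Lemma remove_valid Vs Fs S : valid Vs Fs -> self_contained_set Vs Fs E S ->
  valid (Vs :\: cluster Vs E S) (Fs :\: cluster Vs E S).
Proof.
move=> [sV sF cVF hall] [sS cS hS].
have sSF : S \subset F := subset_trans sS sF.
set a := adj Vs E S.
have hV : Vs :\: cluster Vs E S = Vs :\: a.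
  apply/setP=> x; rewrite /cluster -/a !in_setD !in_setU; case xVs: (x \in Vs); rewrite ?andbF ?andbT //=.
  have xV : x \in V := subsetP sV x xVs.
  case xS: (x \in S) => //=.
  by have := VnF xV; rewrite (subsetP sSF x xS).
have hF : Fs :\: cluster Vs E S = Fs :\: S.
  apply/setP=> x; rewrite /cluster -/a !in_setD !in_setU; case xFs: (x \in Fs); rewrite ?andbF ?andbT //=.
  have xF : x \in F := subsetP sF x xFs.
  case xa: (x \in a); rewrite ?orbF ?orbT //=.
  by have := adj_V xa; rewrite (FnV xF).
have caS : a \subset Vs := adj_sub Vs S.
rewrite hV hF; split.
- by apply: subset_trans sV; apply: subsetDl.
- by apply: subset_trans sF; apply: subsetDl.
- have := cardsID a Vs; have := cardsID S Fs.
  rewrite (setIidPr caS) (setIidPr sS); rewrite -/a in cS; lia.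
move=> Y hY.
have YS : Y :&: S = set0.
  apply/setP=> x; rewrite !inE; case xS: (x \in S); rewrite ?andbF //= andbT.
  by apply/negP=> xY; move: (subsetP hY x xY); rewrite !inE xS.
have YFs : Y \subset Fs := subset_trans hY (subsetDl _ _).
have hYS : #|Y :|: S| <= #|adj Vs E (Y :|: S)| by apply: hall; rewrite subUset YFs sS.
rewrite adjU in hYS.
set b := adj Vs E Y.
have hb : adj (Vs :\: a) E Y = b :\: a by rewrite adjD.
rewrite hb.
have := cardsUI Y S; rewrite YS cards0.
have := cardsID a (b :|: a).
rewrite (setIidPr (subsetUr _ _)) setDUl setDv setU0.
move=> h1 h2; move: hYS cS; rewrite -/a -/b => hYS cS; lia.
Qed.


Lemma msc_sc Vs Fs S : minimal_self_contained Vs Fs E S -> self_contained_set Vs Fs E S.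
Proof. by case. Qed.

Lemma msc_ne Vs Fs S : minimal_self_contained Vs Fs E S -> ~~ ((Vs == set0) && (Fs == set0)).
Proof.
move=> [ne [sS _ _] _]; apply/negP => /andP[_ /eqP F0].
by move: sS; rewrite F0 subset0 (negbTE ne).
Qed.

Lemma card_lt Vs Fs S : minimal_self_contained Vs Fs E S ->
  #|Fs :\: cluster Vs E S| < #|Fs|.
Proof.
move=> [ne [sS _ _] _].
have h1 : S \subset Fs :&: cluster Vs E S by rewrite subsetI sS subsetUl.
have := subset_leq_card h1; have := cardsID (cluster Vs E S) Fs.
have : 0 < #|S| by rewrite card_gt0.
lia.
Qed.

Lemma diamond Vs Fs S1 S2 : valid Vs Fs ->
  minimal_self_contained Vs Fs E S1 -> minimal_self_contained Vs Fs E S2 ->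
  S1 != S2 ->
  [/\ minimal_self_contained (Vs :\: cluster Vs E S1) (Fs :\: cluster Vs E S1) E S2,
      cluster (Vs :\: cluster Vs E S1) E S2 = cluster Vs E S2 &
      new_edges V (Vs :\: cluster Vs E S1) E S2 = new_edges V Vs E S2].
Proof.
move=> hv m1 m2 neq.
have [I0 A0] := disj_min hv m1 m2 neq.
case: hv => [sV sF cVF hall].
case: m1 => [ne1 [s1F c1 h1] mm1]; case: m2 => [ne2 [s2F c2 h2] mm2].
have s1F' : S1 \subset F := subset_trans s1F sF.
have key : forall Y : {set T}, Y \subset S2 -> adj (Vs :\: cluster Vs E S1) E Y = adj Vs E Y.
  move=> Y hY; rewrite adjD; apply/setP=> x; rewrite in_setD.
  case xa: (x \in adj Vs E Y); rewrite ?andbF ?andbT //.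
  rewrite /cluster in_setU negb_or; apply/andP; split.
    apply/negP=> xS; have := VnF (adj_V xa); by rewrite (subsetP s1F' x xS).
  apply/negP=> xa1.
  have : x \in adj Vs E S1 :&: adj Vs E S2 by rewrite in_setI xa1 (subsetP (adjS Vs hY) x xa).
  by rewrite A0 inE.
have s2F' : S2 \subset Fs :\: cluster Vs E S1.
  apply/subsetP=> x xS2; rewrite in_setD (subsetP s2F x xS2) andbT /cluster in_setU negb_or.
  apply/andP; split.
    apply/negP=> xS1; have : x \in S1 :&: S2 by rewrite in_setI xS1 xS2.
    by rewrite I0 inE.
  apply/negP=> xa; have := VnF (adj_V xa).
  by rewrite (subsetP sF x (subsetP s2F x xS2)).
split.
- split => //.
    split => //; first by rewrite key.
    by move=> Y hY; rewrite key //; apply: h2.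
  move=> Y pY nY [sY cY hY]; apply: (mm2 Y pY nY).
  have YS2 : Y \subset S2 by move: pY; rewrite properEneq => /andP[].
  split.
  + exact: subset_trans YS2 s2F.
  + by rewrite -key.
  + move=> Z hZ; rewrite -key; [exact: hY | exact: subset_trans hZ YS2].
- by rewrite /cluster key.
- rewrite /new_edges /cluster key //.
Qed.

Lemma run_inv Vs Fs Vc Ec Vo Eo : alg_run V E Vs Fs Vc Ec Vo Eo ->
  (Vs = set0 /\ Fs = set0 /\ Vo = Vc /\ Eo = Ec) \/
  exists S, [/\ ~~ ((Vs == set0) && (Fs == set0)), minimal_self_contained Vs Fs E S &
     alg_run V E (Vs :\: cluster Vs E S) (Fs :\: cluster Vs E S)
       (cluster Vs E S |: Vc) (Ec :|: new_edges V Vs E S) Vo Eo].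
Proof.
case=> [Vc' Ec' | Vs' Fs' Vc' Ec' S Vo' Eo' h1 h2 h3]; [left | right; exists S]; done.
Qed.

Lemma ex_minimal (Vs Fs : {set T}) k : forall X : {set T}, #|X| <= k -> X != set0 ->
  self_contained_set Vs Fs E X -> exists S, minimal_self_contained Vs Fs E S.
Proof.
elim: k => [|k IH] X hk nX sX.
  by move: hk; rewrite leqn0 cards_eq0 (negbTE nX).
case: (classic (exists Y : {set T}, [/\ Y \proper X, Y != set0 & self_contained_set Vs Fs E Y])).
  move=> [Y [pY nY sY]]; apply: (IH Y) => //.
  have := proper_card pY; lia.
move=> H; exists X; split => // Y pY nY sY; apply: H; by exists Y.
Qed.

Lemma ex_run n : forall (Vs Fs : {set T}) Vc Ec, #|Fs| <= n -> valid Vs Fs ->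
  exists Vo Eo, alg_run V E Vs Fs Vc Ec Vo Eo.
Proof.
elim: n => [|n IH] Vs Fs Vc Ec hn hv; case: (eqVneq Fs set0) => [F0|Fn0].
- have V0 : Vs = set0 by apply: cards0_eq; case: hv => _ _ cVF _; rewrite -cVF F0 cards0.
  subst; exists Vc, Ec; exact: run_done.
- by move: hn; rewrite leqn0 cards_eq0 (negbTE Fn0).
- have V0 : Vs = set0 by apply: cards0_eq; case: hv => _ _ cVF _; rewrite -cVF F0 cards0.
  subst; exists Vc, Ec; exact: run_done.
- have scF : self_contained_set Vs Fs E Fs.
    case: hv => sV sF cVF hall; split => //.
    have := hall Fs (subxx _); have := subset_leq_card (adj_sub Vs Fs); lia.
  have [S mS] := ex_minimal (leqnn _) Fn0 scF.
  have hv1 := remove_valid hv (msc_sc mS).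
  have hlt := card_lt mS.
  have [Vo [Eo r]] := IH _ _ (cluster Vs E S |: Vc) (Ec :|: new_edges V Vs E S)
     (leq_trans (leq_trans hlt hn) (leqnn _)) hv1.
  exists Vo, Eo; exact: run_step (msc_ne mS) mS r.
Qed.

Lemma uniq_run n : forall (Vs Fs : {set T}) Vc Ec Vo1 Eo1 Vo2 Eo2, #|Fs| <= n -> valid Vs Fs ->
  alg_run V E Vs Fs Vc Ec Vo1 Eo1 -> alg_run V E Vs Fs Vc Ec Vo2 Eo2 ->
  Vo1 = Vo2 /\ Eo1 = Eo2.
Proof.
elim: n => [|n IH] Vs Fs Vc Ec Vo1 Eo1 Vo2 Eo2 hn hv r1 r2;
  case/run_inv: r1 => [[V0 [F0 [-> ->]]] | [S1 [ne1 m1 r1]]];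
  case/run_inv: r2 => [[V0' [F0' [-> ->]]] | [S2 [ne2 m2 r2]]] //;
  try (by rewrite V0 F0 !eqxx in ne2); try (by rewrite V0' F0' !eqxx in ne1).
  by have := card_lt m1; lia.
case: (eqVneq S1 S2) => [eS|neq].
  subst S2; apply: (IH _ _ _ _ _ _ _ _ _ (remove_valid hv (msc_sc m1)) r1 r2).
  by have := card_lt m1; lia.
have [d1 d2 d3] := diamond hv m1 m2 neq.
have [e1 e2 e3] := diamond hv m2 m1 (negbT (introF eqP (fun h => (negP neq) (introT eqP (esym h))))).
have hv1 := remove_valid hv (msc_sc m1).
have hv2 := remove_valid hv (msc_sc m2).
have hv12 := remove_valid hv1 (msc_sc d1).
have hl1 := card_lt m1. have hl2 := card_lt m2. have hl12 := card_lt d1.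
have hb : #|(Fs :\: cluster Vs E S1) :\: cluster (Vs :\: cluster Vs E S1) E S2| <= n by lia.
have [Vo [Eo r12]] := ex_run
  (cluster (Vs :\: cluster Vs E S1) E S2 |: (cluster Vs E S1 |: Vc))
  ((Ec :|: new_edges V Vs E S1) :|: new_edges V (Vs :\: cluster Vs E S1) E S2)
  hb hv12.
have r1' := run_step (msc_ne d1) d1 r12.
have hb1 : #|Fs :\: cluster Vs E S1| <= n by lia.
have [-> ->] := IH _ _ _ _ _ _ _ _ hb1 hv1 r1 r1'.
have r2' : alg_run V E (Vs :\: cluster Vs E S2) (Fs :\: cluster Vs E S2)
    (cluster Vs E S2 |: Vc) (Ec :|: new_edges V Vs E S2) Vo Eo.
  apply: (run_step (msc_ne e1) e1); rewrite e2 e3.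
  rewrite d2 d3 in r12.
  have eqV : forall A : {set T}, (A :\: cluster Vs E S2) :\: cluster Vs E S1 =
     (A :\: cluster Vs E S1) :\: cluster Vs E S2 by move=> A; rewrite !setDDl setUC.
  rewrite !eqV setUAC.
  have -> : cluster Vs E S1 |: (cluster Vs E S2 |: Vc) = cluster Vs E S2 |: (cluster Vs E S1 |: Vc).
    by rewrite !setUA (setUC [set cluster Vs E S1]).
  exact: r12.
have hb2 : #|Fs :\: cluster Vs E S2| <= n by lia.
have [-> ->] := IH _ _ _ _ _ _ _ _ hb2 hv2 r2 r2'.
done.
Qed.

End Proof.

Theorem lemma34 (T : finType) (V F : {set T}) (E : rel T)
  (Vo1 Vo2 : {set {set T}}) (Eo1 Eo2 : {set T * {set T}}) :
  bipartite V F E ->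
  self_contained_graph V F E ->
  algorithm1_output V F E Vo1 Eo1 ->
  algorithm1_output V F E Vo2 Eo2 ->
  Vo1 = Vo2 /\ Eo1 = Eo2.
Proof.
move=> [hdis hE] [cFV [_ _ hall]] r1 r2.
have hv : valid V F E V F by split.
exact: (uniq_run hdis hE (leqnn _) hv r1 r2).
Qed.
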